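(* Let $H\in\mathbb{C}^{n\times n}$ be PT-symmetric, i.e., suppose there exists a matrix $P\in\mathbb{C}^{n\times n}$ with $P^{2}=I$ such that $P\bar H - HP = 0$. Then $H$ is pseudo-Hermitian. No diagonalizability assumption on $H$ is required.
   Context: For a matrix $M$, $\bar M$ denotes the entrywise complex conjugate and $M^{\dagger}$ its conjugate transpose; $I$ is the $n\times n$ identity. A matrix $H\in\mathbb{C}^{n\times n}$ is called PT-symmetric if it commutes with $PT$, where $P$ is a linear operator (matrix) with $P^2=I$ and $T$ is complex conjugation; in matrix form this is $P\bar H - HP = 0$. A matrix $H$ is called pseudo-Hermitian if there exists a non-singular Hermitian matrix $G\in\mathbb{C}^{n\times n}$ such that $H^{\dagger}G - GH = 0$. *)

(* Defs.v *)
(* Complex numbers are modelled by an arbitrary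
   numClosedFieldType C (algebraically closed field with conjugation),
   e.g. algC. *)
From HB Require Import structures.
From mathcomp Require Import all_boot all_order all_algebra.
Set Implicit Arguments. Unset Strict Implicit. Unset Printing Implicit Defensive.
Import Order.TTheory GRing.Theory Num.Theory.
Local Open Scope ring_scope.

Definition conjm (C : numClosedFieldType) (m n : nat) (M : 'M[C]_(m, n)) : 'M[C]_(m, n) :=
  map_mx Num.conj M.

Definition adjm (C : numClosedFieldType) (m n : nat) (M : 'M[C]_(m, n)) : 'M[C]_(n, m) :=
  (conjm M)^T.

Definition hermitianm (C : numClosedFieldType) (n : nat) (G : 'M[C]_n) : Prop :=
  adjm G = G.

Definition PT_symmetric (C : numClosedFieldType) (n : nat) (H : 'M[C]_n) : Prop :=
  exists P : 'M[C]_n, P *m P = 1%:M /\ P *m conjm H - H *m P = 0.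

Definition pseudo_hermitian (C : numClosedFieldType) (n : nat) (H : 'M[C]_n) : Prop :=
  exists G : 'M[C]_n,
    [/\ G \in unitmx, hermitianm G & adjm H *m G - G *m H = 0].

(* Main.v *)
Require Import Defs.
From HB Require Import structures.
From mathcomp Require Import all_boot all_order all_algebra.
From mathcomp Require Import all_fingroup zify.
Import GRing.Theory Num.Theory.
Local Open Scope ring_scope.
Set Implicit Arguments. Unset Strict Implicit. Unset Printing Implicit Defensive.

Definition simT (C : fieldType) n (A : 'M[C]_n) :=
  exists S : 'M[C]_n, S \in unitmx /\ S *m A = A^T *m S.

Lemma cong_sim (C : fieldType) m n (A : 'M[C]_n) (W : 'M[C]_(m,n)) (B X : 'M[C]_m) :
  row_free W -> m = n -> W *m A = B *m W -> X \in unitmx ->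
  X *m B = B^T *m X -> simT A.
Proof.
move=> Wf mn WA Xu XB; exists (W^T *m X *m W); split.
  rewrite -row_free_unit /row_free mxrankMfree // -mxrank_tr trmx_mul trmxK.
  rewrite mxrankMfree // mxrank_tr.
  by move: Xu; rewrite -row_free_unit /row_free => /eqP ->; rewrite mn.
rewrite -mulmxA; rewrite WA mulmxA -(mulmxA W^T) XB.
by rewrite !mulmxA -trmx_mul -WA trmx_mul.
Qed.

Lemma shift_sim (C : fieldType) n (A : 'M[C]_n) (l : C) :
  simT (A - l%:M) -> simT A.
Proof.
move=> [S [Su SA]]; exists S; split=> //.
have -> : S *m A = S *m (A - l%:M) + l *: S by rewrite mulmxBr mul_mx_scalar subrK.
by rewrite SA raddfB /= tr_scalar_mx mulmxBl mul_scalar_mx subrK.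
Qed.

Lemma split_sim (C : fieldType) n k1 k2 (A : 'M[C]_n) (W1 : 'M[C]_(k1,n)) (W2 : 'M[C]_(k2,n)) :
  row_free W1 -> row_free W2 -> (W1 :&: W2 = 0)%MS -> (k1 + k2 = n)%N ->
  stablemx W1 A -> stablemx W2 A ->
  simT (conjmx W1 A) -> simT (conjmx W2 A) -> simT A.
Proof.
move=> f1 f2 d12 kn s1 s2 [S1 [S1u E1]] [S2 [S2u E2]].
apply: (@cong_sim _ _ _ A (col_mx W1 W2) (block_mx (conjmx W1 A) 0 0 (conjmx W2 A))
   (block_mx S1 0 0 S2)) => //.
- rewrite /row_free -addsmxE mxrank_disjoint_sum //.
  by move: f1 f2; rewrite /row_free => /eqP -> /eqP ->.
- rewrite mul_col_mx mul_block_col !mul0mx addr0 add0r /conjmx.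
  by rewrite !mulmxKpV.
- by rewrite unitmxE det_ublock unitrM -!unitmxE S1u S2u.
- rewrite tr_block_mx !trmx0 !mulmx_block !mulmx0 !mul0mx !addr0 !add0r.
  by rewrite E1 E2.
Qed.

Lemma trmxX (C : fieldType) n (N : 'M[C]_n) j : (N ^+ j)^T = N^T ^+ j.
Proof.
elim: j => [|j IH]; first by rewrite !expr0 trmx1.
by rewrite exprS exprSr -!mulmxE trmx_mul IH.
Qed.

Definition Wm (C : fieldType) n m (v : 'rV[C]_n) (N : 'M[C]_n) : 'M[C]_(m, n) :=
  \matrix_(i < m) (v *m N ^+ i).

Definition Jm (C : fieldType) m : 'M[C]_m := \matrix_(i < m, j < m) ((i.+1 == j)%N%:R).

Lemma rowWm (C : fieldType) n m (v : 'rV[C]_n) (N : 'M[C]_n) i :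
  row i (Wm m v N) = v *m N ^+ i.
Proof. by rewrite rowK. Qed.

Lemma WmN (C : fieldType) n m (v : 'rV[C]_n) (N : 'M[C]_n) :
  v *m N ^+ m = 0 -> Wm m v N *m N = Jm C m *m Wm m v N.
Proof.
move=> vm; apply/row_matrixP => i; rewrite !row_mul rowWm -mulmxA mulmxE -exprSr.
case: (ltnP i.+1 m) => h.
  have -> : row i (Jm C m) = delta_mx 0 (Ordinal h).
    apply/rowP => k; rewrite !mxE /=.
    by rewrite eq_sym.
  by rewrite -rowE rowWm.
have im : i.+1 = m by apply/eqP; rewrite eqn_leq h ltn_ord.
have -> : row i (Jm C m) = 0.
  apply/rowP => k; rewrite !mxE.
  by rewrite im eqn_leq leqNgt ltn_ord.
by rewrite mul0mx im.
Qed.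

Lemma mul_tr_entry (C : fieldType) m p n (A : 'M[C]_(m,n)) (B : 'M[C]_(p,n)) i j :
  (A *m B^T) i j = (row i A *m (row j B)^T) 0 0.
Proof. by rewrite !mxE; apply: eq_bigr => k _; rewrite !mxE. Qed.

Lemma Hentry (C : fieldType) n m (v u : 'rV[C]_n) (N : 'M[C]_n) i j :
  (Wm m v N *m (Wm m u N^T)^T) i j = (v *m N ^+ (i + j) *m u^T) 0 0.
Proof.
by rewrite mul_tr_entry !rowWm trmx_mul trmxX trmxK mulmxA exprD -mulmxE mulmxA.
Qed.

Lemma H_unit (C : fieldType) n m (v u : 'rV[C]_n) (N : 'M[C]_n) :
  N ^+ m = 0 -> (v *m N ^+ m.-1 *m u^T) 0 0 = 1 ->
  Wm m v N *m (Wm m u N^T)^T \in unitmx.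
Proof.
move=> Nm h1; set H := _ *m _.
have He : forall i j, H i j = (v *m N ^+ (i + j) *m u^T) 0 0 by move=> i j; exact: Hentry.
clearbody H.
pose s : {perm 'I_m} := perm (@rev_ord_inj m).
have trig : is_trig_mx (col_perm s H)^T.
  apply/is_trig_mxP => i j ij; rewrite !mxE He permE /=.
  have -> : (j + (m - i.+1) = m + (j - i.+1))%N.
    have := ltn_ord i; have := ltn_ord j; move: ij; lia.
  by rewrite exprD Nm mul0r mulmx0 mul0mx mxE.
have : \det (col_perm s H)^T = 1.
  rewrite det_trig //; apply: big1 => i _; rewrite !mxE He permE /=.
  have -> : (i + (m - i.+1) = m.-1)%N by have := ltn_ord i; lia.
  by [].
rewrite det_tr col_permE det_mulmx unitmxE => e.
by apply/unitrPr; exists (\det (perm_mx s^-1)).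
Qed.

Lemma nil_sim (C : fieldType) n m (N : 'M[C]_n) :
  (forall k, (k < n)%N -> forall B : 'M[C]_k, simT B) ->
  (0 < m)%N -> N ^+ m = 0 -> N ^+ m.-1 != 0 -> simT N.
Proof.
move=> IH m0 Nm Nm1.
have [i [x Mix]] : exists i x, (N ^+ m.-1) i x != 0.
  suff : [exists i, [exists x, (N ^+ m.-1) i x != 0]].
    by move=> /existsP[i /existsP[x ?]]; exists i, x.
  move: Nm1; apply: contraR; rewrite negb_exists => /forallP h.
  apply/eqP/matrixP => i x; rewrite mxE.
  by move: (h i); rewrite negb_exists => /forallP /(_ x) /negPn /eqP.
set a := (N ^+ m.-1) i x in Mix.
pose v : 'rV[C]_n := delta_mx 0 i.
pose u : 'rV[C]_n := a^-1 *: delta_mx 0 x.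
have h1 : (v *m N ^+ m.-1 *m u^T) 0 0 = 1.
  rewrite /v /u -rowE linearZ /= trmx_delta -scalemxAr -colE !mxE.
  by rewrite mulVf.
set W1 := Wm m v N.
set Z := (Wm m u N^T)^T.
have Hu : W1 *m Z \in unitmx by exact: H_unit.
have Nm' : N^T ^+ m = 0 by rewrite -trmxX Nm trmx0.
have W1N : W1 *m N = Jm C m *m W1 by apply: WmN; rewrite Nm mulmx0.
have NZ : N *m Z = Z *m (Jm C m)^T.
  have := WmN (v := u) (N := N^T) (m := m); rewrite Nm' mulmx0 => /(_ erefl) e.
  by rewrite /Z -trmx_mul -e trmx_mul trmxK.
have rH : \rank (W1 *m Z) = m by move: Hu; rewrite -row_free_unit => /eqP.
have rW1 : \rank W1 = m.
  by apply/eqP; rewrite eqn_leq rank_leq_row -{1}rH mxrankM_maxl.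
have rZ : \rank Z = m.
  by apply/eqP; rewrite eqn_leq rank_leq_col -{1}rH mxrankM_maxr.
have mn : (m <= n)%N by rewrite -rW1 rank_leq_col.
set K := kermx Z.
have sK : stablemx K N.
  by apply/sub_kermxP; rewrite -mulmxA NZ mulmxA mulmx_ker mul0mx.
have sW : stablemx W1 N by rewrite W1N submxMl.
have cap0 : (W1 :&: K = 0)%MS.
  apply/eqP/rowV0P => y; rewrite sub_capmx => /andP[/submxP[b ->] /sub_kermxP].
  rewrite -mulmxA => bH.
  by rewrite -(mulmxK Hu b) bH !mul0mx.
have rK : \rank K = (n - m)%N by rewrite mxrank_ker rZ.
have fW1 : row_free W1 by rewrite /row_free rW1.
case: (ltnP m n) => [mlt|mge].
  apply: (@split_sim _ _ _ _ N W1 (row_base K)) => //.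
  - exact: row_base_free.
  - apply/eqP/rowV0P => y; rewrite sub_capmx eq_row_base -sub_capmx cap0 submx0; exact/eqP.
  - by rewrite rK; lia.
  - by rewrite stablemx_row_base.
  - by apply: IH.
  - by apply: IH; rewrite rK; lia.
have emn : m = n by apply/eqP; rewrite eqn_leq mn mge.
apply: (@cong_sim _ _ _ N W1 (Jm C m) (invmx (W1 *m Z))) => //.
  by rewrite unitmx_inv.
have JH : Jm C m *m (W1 *m Z) = (W1 *m Z) *m (Jm C m)^T.
  by rewrite mulmxA -W1N -mulmxA NZ mulmxA.
apply: (canRL (mulmxK Hu)).
by rewrite -mulmxA JH mulmxA mulVmx ?mul1mx.
Qed.

Lemma kermx_full0 (C : fieldType) n (M : 'M[C]_n) : \rank (kermx M) = n -> M = 0.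
Proof.
move=> r; have Ku : kermx M \in unitmx by rewrite -row_free_unit /row_free r.
by rewrite -[M]mul1mx -(mulVmx Ku) -mulmxA mulmx_ker mulmx0.
Qed.

Lemma find_index (C : fieldType) n (N : 'M[C]_n.+1) e :
  N ^+ e = 0 -> exists m, [/\ (0 < m)%N, N ^+ m = 0 & N ^+ m.-1 != 0].
Proof.
elim: e => [|e IH].
  by rewrite expr0 => /matrixP /(_ 0 0); rewrite !mxE eqxx => /eqP; rewrite oner_eq0.
move=> Ne; have [Ne0|Nne] := eqVneq (N ^+ e) 0; first exact: IH.
by exists e.+1.
Qed.

Lemma all_sim (C : numClosedFieldType) n (A : 'M[C]_n) : simT A.
Proof.
elim/ltn_ind: n A => n IH A.
case: n IH A => [|n] IH A.
  by exists 1%:M; split; [exact: unitmx1 | apply/matrixP => [[]]].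
have [l hl] := eigenvalue_closed A (ltn0Sn n).
have pn0 : mxminpoly A != 0 by apply: monic_neq0; exact: mxminpoly_monic.
have [e [q nq pe]] := multiplicity_XsubC (mxminpoly A) l.
move: nq; rewrite pn0 /= => nq.
set U1 := kermxpoly A (('X - l%:P) ^+ e).
set U2 := kermxpoly A q.
have cop : coprimep (('X - l%:P) ^+ e) q.
  by apply: coprimep_expl; rewrite coprimep_sym coprimep_XsubC.
have cap : (U1 :&: U2 = 0)%MS by apply: mxdirect_kermxpoly.
have rsum : (\rank U1 + \rank U2 = n.+1)%N.
  rewrite -mxrank_disjoint_sum // -(kermxpolyM A cop) mulrC -pe.
  by rewrite (kermxpoly_min (dvdpp _)) mxrank1.
have sA : forall p, stablemx (kermxpoly A p) A.
  by move=> p; apply: comm_mx_stable_kermxpoly.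
have [r1|r1] := eqVneq (\rank U1) 0%N.
  exfalso; move: rsum; rewrite r1 add0n => /kermx_full0 q0.
  have : root q l.
    apply: (root_dvdp (mxminpoly_min q0)).
    by rewrite -eigenvalue_root_min.
  by rewrite (negPf nq).
have [r2|r2] := eqVneq (\rank U2) 0%N.
  move: rsum; rewrite r2 addn0 => /kermx_full0.
  rewrite rmorphXn /= rmorphB /= horner_mx_X horner_mx_C => Ne.
  apply: (shift_sim (l := l)).
  have [m [m0 Nm Nm1]] := find_index Ne.
  by apply: (nil_sim (m := m)) => // k kn; apply: IH.
apply: (@split_sim _ _ _ _ A (row_base U1) (row_base U2)).
- exact: row_base_free.
- exact: row_base_free.
- apply/eqP/rowV0P => y; rewrite sub_capmx !eq_row_base -sub_capmx cap submx0.
  exact/eqP.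
- exact: rsum.
- by rewrite stablemx_row_base; apply: sA.
- by rewrite stablemx_row_base; apply: sA.
- by apply: IH; move: r2 rsum; lia.
- by apply: IH; move: r1 rsum; lia.
Qed.

Lemma adjE (C : numClosedFieldType) m n (X : 'M[C]_(m,n)) i j : adjm X i j = (X j i)^*.
Proof. by rewrite !mxE. Qed.

Lemma adjM (C : numClosedFieldType) m n p (X : 'M[C]_(m,n)) (Y : 'M[C]_(n,p)) :
  adjm (X *m Y) = adjm Y *m adjm X.
Proof.
apply/matrixP => i j; rewrite adjE !mxE rmorph_sum; apply: eq_bigr => k _.
by rewrite !adjE rmorphM mulrC.
Qed.

Lemma adjK (C : numClosedFieldType) m n (X : 'M[C]_(m,n)) : adjm (adjm X) = X.
Proof. by apply/matrixP => i j; rewrite !adjE conjCK. Qed.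

Lemma herm_fix (C : numClosedFieldType) n (H T : 'M[C]_n) :
  T \in unitmx -> adjm H *m T = T *m H -> pseudo_hermitian H.
Proof.
move=> Tu E1.
have E2 : adjm H *m adjm T = adjm T *m H.
  by rewrite -[H in RHS]adjK -!adjM E1.
pose G (t : C) := (1 + 'i * t) *: T + (1 - 'i * t) *: adjm T.
have GE : forall t, adjm H *m G t - G t *m H = 0.
  move=> t; rewrite /G mulmxDr mulmxDl -!scalemxAr -!scalemxAl E1 E2.
  by rewrite subrr.
have GH : forall k : nat, hermitianm (G k%:R).
  move=> k; rewrite /hermitianm; apply/matrixP => i j.
  rewrite adjE /G !mxE !(rmorphD, rmorphB, rmorphN, rmorphM, rmorph1, rmorph_nat) /= !conjCi !conjCK.
  by rewrite !mulNr opprK addrC.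
pose Tp := map_mx polyC T; pose Tap := map_mx polyC (adjm T).
pose Gp := (1 + ('i)%:P * 'X) *: Tp + (1 - ('i)%:P * 'X) *: Tap.
have ev : forall t, map_mx (horner_eval t) Gp = G t.
  move=> t; apply/matrixP => a b; rewrite /Gp /G /Tp /Tap !mxE horner_evalE.
  by rewrite !hornerE.
set d := \det Gp.
have dE : forall t, \det (G t) = d.[t].
  by move=> t; rewrite -ev det_map_mx.
have dn0 : d != 0.
  apply: contraTneq Tu => d0.
  have := dE (- 'i); rewrite d0 horner0 /G mulrN mulCii opprK.
  rewrite subrr scale0r addr0 detZ => /eqP; rewrite mulf_eq0 expf_eq0.
  rewrite unitmxE unitfE => /orP[/andP[_ ]|->] //.
  by rewrite -[1 + 1 : C]/(2%:R) pnatr_eq0.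
pose rs := [seq k%:R | k <- iota 0 (size d)] : seq C.
have : ~~ all (root d) rs.
  apply/negP => /(max_poly_roots dn0) h.
  have u : uniq rs.
    rewrite map_inj_uniq ?iota_uniq //.
    by move=> a b /eqP; rewrite eqr_nat => /eqP.
  by move: (h u); rewrite size_map size_iota ltnn.
case/allPn => _ /mapP[k _ ->] nr.
exists (G k%:R); split; [ | exact: GH | exact: GE].
by rewrite unitmxE unitfE dE.
Qed.

Unset Implicit Arguments. Set Strict Implicit. Set Printing Implicit Defensive.

Theorem theorem3 (C : numClosedFieldType) (n : nat) (H : 'M[C]_n) :
  PT_symmetric H -> pseudo_hermitian H.
Proof.
move=> [P [PP PH]].
have [S [Su SM]] := all_sim (conjm H).
have Pu : P \in unitmx by case: (mulmx1_unit PP).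
have e : P *m conjm H = H *m P by apply/eqP; rewrite -subr_eq0 PH.
have MP : conjm H *m P = P *m H.
  rewrite -{1}[conjm H]mul1mx -PP -(mulmxA P P) e.
  by rewrite -!mulmxA PP mulmx1.
apply: (@herm_fix C n H (S *m P)); first by rewrite unitmx_mul Su.
by rewrite mulmxA /adjm -SM -mulmxA MP mulmxA.
Qed.
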